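(* Assume the setting below, and let $\gamma=\sup_{W_1\in V_{1,H},W_2\in V_{2,H}}\frac{(T_1W_1,T_2W_2)}{\|T_1W_1\|\,\|T_2W_2\|}$ (with $\|\cdot\|$ the $L^2(\Omega)$ norm), assumed to lie in $(0,1)$. If $$\tau^2\le 2(1-\gamma^2)\inf_{W\in V_{2,H}}\frac{\|W\|_{m_{22}}^2}{\|W\|_{a_{22}}^2+\|W\|_{c_{22}}^2},$$ then discretization scheme 2 is stable, i.e. it admits a discrete energy that is conserved from one time step to the next and is nonnegative.
   Context: Let $\Omega\subset\mathbb{R}^d$ be bounded, $\kappa>0$ a coefficient, $a(u,v)=\int_\Omega\kappa\nabla u\cdot\nabla v$, and $(\cdot,\cdot)$ the $L^2(\Omega)$ inner product. $V_{1,H},V_{2,H}$ are finite-dimensional spaces (in the paper $V_{j,H}=\prod_{k\in I_j}V_H$ for a coarse finite element space $V_H$ and a partition $I_1\sqcup I_2$ of the continua indices), with linear maps $T_{j,0},T_{j,1}$ on $V_{j,H}$ and $T_j=T_{j,0}+T_{j,1}$ (in the paper, $T_{j,0}U=\sum_K\mathbf{1}_K\sum_{k\in I_j}\phi_k^KU_k$, $T_{j,1}U=\sum_K\mathbf{1}_K\sum_{k\in I_j}\sum_m\phi_k^{K,m}\partial_{x_m}U_k$ with fixed multiscale basis functions). Bilinear forms: $m_{ij}(U,W)=(T_jU,T_iW)$, $a_{ij}(U,W)=a(T_{j,1}U,T_{i,1}W)$, $c_{ij}(U,W)=a(T_{j,0}U,T_{i,0}W)$ for $U\in V_{j,H},W\in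 V_{i,H}$; $\|W\|_{x_{22}}^2=x_{22}(W,W)$ for $x\in\{m,a,c\}$. Discretization scheme 2 (with zero source, as assumed in the paper's stability analysis), time step $\tau>0$: for $n\ge1$, for all $W_1\in V_{1,H}$, $\tfrac{1}{\tau^2} m_{11}(U_1^{n+1}-2U_1^n+U_1^{n-1},W_1)+\tfrac{1}{\tau^2} m_{12}(U_2^{n+1}-2U_2^n+U_2^{n-1},W_1)+\tfrac12 a_{11}(U_1^{n+1}+U_1^{n-1},W_1)+a_{12}(U_2^n,W_1)+\tfrac12 c_{11}(U_1^{n+1}+U_1^{n-1},W_1)+c_{12}(U_2^n,W_1)=0$, and for all $W_2\in V_{2,H}$, $\tfrac{1}{\tau^2} m_{22}(U_2^{n+1}-2U_2^n+U_2^{n-1},W_2)+\tfrac{1}{\tau^2} m_{21}(U_1^{n+1}-2U_1^n+U_1^{n-1},W_2)+a_{21}(U_1^n,W_2)+a_{22}(U_2^n,W_2)+c_{21}(U_1^n,W_2)+c_{22}(U_2^n,W_2)=0$. The infimum is over nonzero $W$. *)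

(* Defs.v *)
From HB Require Import structures.
From mathcomp Require Import all_boot all_order all_algebra.
From mathcomp Require Import all_classical all_reals.
Set Implicit Arguments. Unset Strict Implicit. Unset Printing Implicit Defensive.
Import Order.TTheory GRing.Theory Num.Theory.
Local Open Scope ring_scope.
Local Open Scope classical_set_scope.

(* The abstract setting.
   [H]   : ambient real function space (L^2(Omega) / H^1(Omega) in the paper),
   [ip]  : the L^2 inner product ( . , . ),
   [a]   : the energy form a(u,v) = int kappa grad u . grad v,
   [Vj]  : the finite-dimensional coarse spaces V_{j,H},
   [Tj0], [Tj1] : the linear maps T_{j,0}, T_{j,1} : V_{j,H} -> H. *)

Definition inner_product (R : realType) (H : lmodType R) (ip : H -> H -> R) : Prop :=
  (forall u v, ip u v = ip v u) /\
  (forall (k : R) u v w, ip (k *: u + v) w = k * ip u w + ip v w) /\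
  (forall u, 0 <= ip u u) /\
  (forall u, ip u u = 0 -> u = 0).

Definition energy_form (R : realType) (H : lmodType R) (a : H -> H -> R) : Prop :=
  (forall u v, a u v = a v u) /\
  (forall (k : R) u v w, a (k *: u + v) w = k * a u w + a v w) /\
  (forall u, 0 <= a u u).

Definition l2norm (R : realType) (H : lmodType R) (ip : H -> H -> R) (u : H) : R :=
  Num.sqrt (ip u u).

Definition Tsum (R : realType) (H V : lmodType R) (T0 T1 : V -> H) (U : V) : H :=
  T0 U + T1 U.

(* Generic block form  b_{ij}(U, W) = b (Tj U) (Ti W),  U in V_j, W in V_i.
   m_ij = bform ip Tj Ti ;  a_ij = bform a Tj1 Ti1 ;  c_ij = bform a Tj0 Ti0. *)
Definition bform (R : realType) (H Vj Vi : lmodType R) (b : H -> H -> R)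
  (Tj : Vj -> H) (Ti : Vi -> H) (U : Vj) (W : Vi) : R := b (Tj U) (Ti W).

Definition gamma_const (R : realType) (H V1 V2 : lmodType R) (ip : H -> H -> R)
  (T1 : V1 -> H) (T2 : V2 -> H) : R :=
  sup [set r : R | exists W1 W2, T1 W1 != 0 /\ T2 W2 != 0 /\
         r = ip (T1 W1) (T2 W2) / (l2norm ip (T1 W1) * l2norm ip (T2 W2))].

(* Discretization scheme 2 (zero source), for all n >= 1. *)
Definition scheme2 (R : realType) (H V1 V2 : lmodType R) (ip a : H -> H -> R)
  (T10 T11 : V1 -> H) (T20 T21 : V2 -> H) (tau : R)
  (U1 : nat -> V1) (U2 : nat -> V2) : Prop :=
  let T1 := Tsum T10 T11 in let T2 := Tsum T20 T21 in
  let m11 := bform ip T1 T1 in let m12 := bform ip T2 T1 in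
  let m21 := bform ip T1 T2 in let m22 := bform ip T2 T2 in
  let a11 := bform a T11 T11 in let a12 := bform a T21 T11 in
  let a21 := bform a T11 T21 in let a22 := bform a T21 T21 in
  let c11 := bform a T10 T10 in let c12 := bform a T20 T10 in
  let c21 := bform a T10 T20 in let c22 := bform a T20 T20 in
  forall n : nat, (0 < n)%N ->
    (forall W1 : V1,
       1 / tau ^+ 2 * m11 (U1 n.+1 - U1 n *+ 2 + U1 n.-1) W1
     + 1 / tau ^+ 2 * m12 (U2 n.+1 - U2 n *+ 2 + U2 n.-1) W1
     + 1 / 2 * a11 (U1 n.+1 + U1 n.-1) W1 + a12 (U2 n) W1
     + 1 / 2 * c11 (U1 n.+1 + U1 n.-1) W1 + c12 (U2 n) W1 = 0) /\
    (forall W2 : V2,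
       1 / tau ^+ 2 * m22 (U2 n.+1 - U2 n *+ 2 + U2 n.-1) W2
     + 1 / tau ^+ 2 * m21 (U1 n.+1 - U1 n *+ 2 + U1 n.-1) W2
     + a21 (U1 n) W2 + a22 (U2 n) W2
     + c21 (U1 n) W2 + c22 (U2 n) W2 = 0).

(* Discrete energy E^{n+1/2} of scheme 2 (obtained by testing with
   W_i = U_i^{n+1} - U_i^{n-1}):
     E^{n+1/2} = (1/tau^2) ||T1 D1 + T2 D2||^2
               + 1/2 (||D1||_{a11}^2 + ||D1||_{c11}^2)
               + sum_{i,j} (a_ij + c_ij)(U_j^{n+1}, U_i^n),
   where D_j = U_j^{n+1} - U_j^n. *)
Definition energy2 (R : realType) (H V1 V2 : lmodType R) (ip a : H -> H -> R)
  (T10 T11 : V1 -> H) (T20 T21 : V2 -> H) (tau : R)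
  (U1 : nat -> V1) (U2 : nat -> V2) (n : nat) : R :=
  let T1 := Tsum T10 T11 in let T2 := Tsum T20 T21 in
  let m11 := bform ip T1 T1 in let m12 := bform ip T2 T1 in
  let m21 := bform ip T1 T2 in let m22 := bform ip T2 T2 in
  let a11 := bform a T11 T11 in let a12 := bform a T21 T11 in
  let a21 := bform a T11 T21 in let a22 := bform a T21 T21 in
  let c11 := bform a T10 T10 in let c12 := bform a T20 T10 in
  let c21 := bform a T10 T20 in let c22 := bform a T20 T20 in
  let D1 := U1 n.+1 - U1 n in let D2 := U2 n.+1 - U2 n in
  1 / tau ^+ 2 * (m11 D1 D1 + m12 D2 D1 + m21 D1 D2 + m22 D2 D2)
  + 1 / 2 * (a11 D1 D1 + c11 D1 D1)
  + (a11 (U1 n.+1) (U1 n) + a12 (U2 n.+1) (U1 n)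
     + a21 (U1 n.+1) (U2 n) + a22 (U2 n.+1) (U2 n))
  + (c11 (U1 n.+1) (U1 n) + c12 (U2 n.+1) (U1 n)
     + c21 (U1 n.+1) (U2 n) + c22 (U2 n.+1) (U2 n)).

(* Main.v *)
Require Import Defs.
From HB Require Import structures.
From mathcomp Require Import all_boot all_order all_algebra.
From mathcomp Require Import all_classical all_reals.
From mathcomp Require Import lra.
Import Order.TTheory GRing.Theory Num.Theory.
Local Open Scope ring_scope.

Set Implicit Arguments. Unset Strict Implicit.
Section Bil.
Variables (R : realType) (H : lmodType R) (b : H -> H -> R).
Hypothesis bsym : forall u v, b u v = b v u.
Hypothesis blin : forall (k : R) u v w, b (k *: u + v) w = k * b u w + b v w.

Lemma b0l w : b 0 w = 0.
Proof. have := blin 1 0 0 w; rewrite scaler0 addr0 mul1r => h; lra. Qed.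
Lemma bDl u v w : b (u + v) w = b u w + b v w.
Proof. by have := blin 1 u v w; rewrite scale1r mul1r. Qed.
Lemma bNl u w : b (- u) w = - b u w.
Proof. by have := blin (-1) u 0 w; rewrite addr0 b0l addr0 scaleN1r mulN1r. Qed.
Lemma bDr u v w : b w (u + v) = b w u + b w v.
Proof. by rewrite bsym bDl !(bsym w). Qed.
Lemma bNr u w : b w (- u) = - b w u.
Proof. by rewrite bsym bNl bsym. Qed.
End Bil.

Lemma TsumD (R : realType) (H V : lmodType R) (T0 T1 : {linear V -> H}) x y :
  Tsum T0 T1 (x + y) = Tsum T0 T1 x + Tsum T0 T1 y.
Proof. by rewrite /Tsum !raddfD addrACA. Qed.
Lemma TsumN (R : realType) (H V : lmodType R) (T0 T1 : {linear V -> H}) x :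
  Tsum T0 T1 (- x) = - Tsum T0 T1 x.
Proof. by rewrite /Tsum !raddfN opprD. Qed.

Ltac sym6 S x1 x2 x3 x4 x5 x6 :=
  have := S x1 x2; have := S x1 x3; have := S x1 x4; have := S x1 x5; have := S x1 x6;
  have := S x2 x3; have := S x2 x4; have := S x2 x5; have := S x2 x6;
  have := S x3 x4; have := S x3 x5; have := S x3 x6;
  have := S x4 x5; have := S x4 x6; have := S x5 x6.
Ltac sym4 S x1 x2 x3 x4 :=
  have := S x1 x2; have := S x1 x3; have := S x1 x4;
  have := S x2 x3; have := S x2 x4; have := S x3 x4.

Section Ids.
Variables (R : realType) (H V1 V2 : lmodType R) (b : H -> H -> R).
Hypothesis bsym : forall u v, b u v = b v u.
Hypothesis blin : forall (k : R) u v w, b (k *: u + v) w = k * b u w + b v w.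
Variables (P1 : V1 -> H) (P2 : V2 -> H).
Hypothesis P1D : forall x y, P1 (x + y) = P1 x + P1 y.
Hypothesis P1N : forall x, P1 (- x) = - P1 x.
Hypothesis P2D : forall x y, P2 (x + y) = P2 x + P2 y.
Hypothesis P2N : forall x, P2 (- x) = - P2 x.

Ltac expand := rewrite /bform ?(P1D, P1N, P2D, P2N);
  rewrite ?(bDl blin, bDr bsym blin, bNl blin, bNr bsym blin).

Lemma mass_id (x0 x1 x2 : V1) (y0 y1 y2 : V2) :
  bform b P1 P1 (x2 - x1 *+ 2 + x0) (x2 - x0) + bform b P2 P1 (y2 - y1 *+ 2 + y0) (x2 - x0)
  + (bform b P2 P2 (y2 - y1 *+ 2 + y0) (y2 - y0) + bform b P1 P2 (x2 - x1 *+ 2 + x0) (y2 - y0))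
  = (bform b P1 P1 (x2 - x1) (x2 - x1) + bform b P2 P1 (y2 - y1) (x2 - x1)
     + bform b P1 P2 (x2 - x1) (y2 - y1) + bform b P2 P2 (y2 - y1) (y2 - y1))
  - (bform b P1 P1 (x1 - x0) (x1 - x0) + bform b P2 P1 (y1 - y0) (x1 - x0)
     + bform b P1 P2 (x1 - x0) (y1 - y0) + bform b P2 P2 (y1 - y0) (y1 - y0)).
Proof.
rewrite !mulr2n; expand. sym6 bsym (P1 x0) (P1 x1) (P1 x2) (P2 y0) (P2 y1) (P2 y2). intros; lra.
Qed.

Lemma stiff_id (x0 x1 x2 : V1) (y0 y1 y2 : V2) :
  1 / 2 * bform b P1 P1 (x2 + x0) (x2 - x0) + bform b P2 P1 y1 (x2 - x0)
  + (bform b P1 P2 x1 (y2 - y0) + bform b P2 P2 y1 (y2 - y0))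
  = (1 / 2 * bform b P1 P1 (x2 - x1) (x2 - x1)
     + (bform b P1 P1 x2 x1 + bform b P2 P1 y2 x1 + bform b P1 P2 x2 y1 + bform b P2 P2 y2 y1))
  - (1 / 2 * bform b P1 P1 (x1 - x0) (x1 - x0)
     + (bform b P1 P1 x1 x0 + bform b P2 P1 y1 x0 + bform b P1 P2 x1 y0 + bform b P2 P2 y1 y0)).
Proof.
expand. sym6 bsym (P1 x0) (P1 x1) (P1 x2) (P2 y0) (P2 y1) (P2 y2). intros; lra.
Qed.

Lemma stiff_pos_id (x0 x1 : V1) (y0 y1 : V2) :
  1 / 2 * bform b P1 P1 (x1 - x0) (x1 - x0)
     + (bform b P1 P1 x1 x0 + bform b P2 P1 y1 x0 + bform b P1 P2 x1 y0 + bform b P2 P2 y1 y0)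
  = 1 / 4 * b (P1 (x1 + x0) + P2 (y1 + y0)) (P1 (x1 + x0) + P2 (y1 + y0))
    + 1 / 4 * b (P1 (x1 - x0) - P2 (y1 - y0)) (P1 (x1 - x0) - P2 (y1 - y0))
    - 1 / 2 * bform b P2 P2 (y1 - y0) (y1 - y0).
Proof.
expand. sym4 bsym (P1 x0) (P1 x1) (P2 y0) (P2 y1). intros; lra.
Qed.

Lemma mass_sq (x0 x1 : V1) (y0 y1 : V2) :
  bform b P1 P1 (x1 - x0) (x1 - x0) + bform b P2 P1 (y1 - y0) (x1 - x0)
     + bform b P1 P2 (x1 - x0) (y1 - y0) + bform b P2 P2 (y1 - y0) (y1 - y0)
  = b (P1 (x1 - x0) + P2 (y1 - y0)) (P1 (x1 - x0) + P2 (y1 - y0)).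
Proof.
rewrite /bform (bDl blin) !(bDr bsym blin) (bsym (P2 _) (P1 _)); lra.
Qed.
End Ids.

Theorem theorem3 (R : realType) (H : lmodType R) (V1 V2 : vectType R)
  (ip a : H -> H -> R)
  (T10 T11 : {linear V1 -> H}) (T20 T21 : {linear V2 -> H}) (tau : R) :
  inner_product ip -> energy_form a -> 0 < tau ->
  let gamma := gamma_const ip (Tsum T10 T11) (Tsum T20 T21) in
  0 < gamma < 1 ->
  (forall W : V2, W != 0 ->
     bform a T21 T21 W W + bform a T20 T20 W W != 0 ->
     tau ^+ 2 <= 2 * (1 - gamma ^+ 2) *
       (bform ip (Tsum T20 T21) (Tsum T20 T21) W W /
        (bform a T21 T21 W W + bform a T20 T20 W W))) ->
  forall (U1 : nat -> V1) (U2 : nat -> V2),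
    scheme2 ip a T10 T11 T20 T21 tau U1 U2 ->
    (forall n : nat, (0 < n)%N ->
       energy2 ip a T10 T11 T20 T21 tau U1 U2 n
       = energy2 ip a T10 T11 T20 T21 tau U1 U2 n.-1) /\
    (forall n : nat, 0 <= energy2 ip a T10 T11 T20 T21 tau U1 U2 n).
Proof.
move=> [isym [ilin [ipos idef]]] [asym [alin apos]] tau0 gamma hg hcfl U1 U2 hs.
have iDl := bDl ilin; have iDr := bDr isym ilin; have iNl := bNl ilin; have iNr := bNr isym ilin.
have aDl := bDl alin; have aDr := bDr asym alin; have aNl := bNl alin; have aNr := bNr asym alin.
have T1D := TsumD T10 T11. have T1N := TsumN T10 T11.
have T2D := TsumD T20 T21. have T2N := TsumN T20 T21.
have tauP : tau ^+ 2 != 0 by rewrite expf_neq0 // gt_eqF.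
have tt : 1 / tau ^+ 2 * tau ^+ 2 = 1 by rewrite mul1r mulVf.
have t0 : 0 < 1 / tau ^+ 2 by rewrite mul1r invr_gt0 exprn_gt0.
split.
  case=> // m _; change (m.+1.-1) with m.
  have [h1 h2] := hs m.+1 isT.
  move: h1 h2; rewrite [m.+1.-1]/= => h1 h2.
  have e1 := h1 (U1 m.+2 - U1 m). have e2 := h2 (U2 m.+2 - U2 m).
  have M := mass_id isym ilin T1D T1N T2D T2N (U1 m) (U1 m.+1) (U1 m.+2) (U2 m) (U2 m.+1) (U2 m.+2).
  have SA := stiff_id asym alin (raddfD T11) (raddfN T11) (raddfD T21) (raddfN T21)
     (U1 m) (U1 m.+1) (U1 m.+2) (U2 m) (U2 m.+1) (U2 m.+2).
  have SC := stiff_id asym alin (raddfD T10) (raddfN T10) (raddfD T20) (raddfN T20)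
     (U1 m) (U1 m.+1) (U1 m.+2) (U2 m) (U2 m.+1) (U2 m.+2).
  have Mt := congr1 (fun z => 1 / tau ^+ 2 * z) M.
  rewrite /energy2; cbv beta zeta. move: e1 e2 Mt SA SC.
  set t := 1 / tau ^+ 2. move=> e1 e2 Mt SA SC.
  lra.
pose S := [set r : R | exists W1 W2, Tsum T10 T11 W1 != 0 /\ Tsum T20 T21 W2 != 0 /\
         r = ip (Tsum T10 T11 W1) (Tsum T20 T21 W2) /
             (l2norm ip (Tsum T10 T11 W1) * l2norm ip (Tsum T20 T21 W2))]%classic.
have gS : gamma = sup S by [].
have hsup : has_sup S.
  apply: contrapT => /sup_out; rewrite -gS => g0.
  by move: hg; rewrite g0 ltxx.
have gub := sup_upper_bound hsup; rewrite -gS in gub.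
have ip0l : forall w, ip 0 w = 0 := b0l ilin.
have nrm0 : forall u, 0 <= l2norm ip u by move=> u; exact: sqrtr_ge0.
have nrmsq : forall u, l2norm ip u ^+ 2 = ip u u by move=> u; rewrite sqr_sqrtr.
have nrmpos : forall u, u != 0 -> 0 < l2norm ip u.
  move=> u u0; rewrite sqrtr_gt0 lt_def ipos andbT.
  by apply/eqP => /idef /eqP; rewrite (negbTE u0).
have nrmN : forall u, l2norm ip (- u) = l2norm ip u.
  by move=> u; rewrite /l2norm (bNl ilin) (bNr isym ilin) opprK.
have cs : forall D1 D2,
    `|ip (Tsum T10 T11 D1) (Tsum T20 T21 D2)| <=
    gamma * l2norm ip (Tsum T10 T11 D1) * l2norm ip (Tsum T20 T21 D2).
  move=> D1 D2.
  have g0 : 0 <= gamma by case/andP: hg => /ltW.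
  have [u0|u0] := eqVneq (Tsum T10 T11 D1) 0.
    by rewrite u0 ip0l normr0 mulr_ge0 // mulr_ge0.
  have [v0|v0] := eqVneq (Tsum T20 T21 D2) 0.
    by rewrite v0 isym ip0l normr0 mulr_ge0 // mulr_ge0.
  have np := mulr_gt0 (nrmpos _ u0) (nrmpos _ v0).
  rewrite -mulrA ler_norml; apply/andP; split.
    rewrite lerNl -ler_pdivrMr //; apply: gub.
    exists (- D1), D2; rewrite T1N oppr_eq0 u0 v0; split => //; split => //.
    by rewrite (bNl ilin) nrmN mulNr.
  rewrite -ler_pdivrMr //; apply: gub.
  by exists D1, D2.
have key : forall D1 D2,
   1 / 2 * (bform a T21 T21 D2 D2 + bform a T20 T20 D2 D2) <=
   1 / tau ^+ 2 * ip (Tsum T10 T11 D1 + Tsum T20 T21 D2) (Tsum T10 T11 D1 + Tsum T20 T21 D2).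
  move=> D1 D2.
  have := cs D1 D2.
  have nu0 := nrm0 (Tsum T10 T11 D1). have nv0 := nrm0 (Tsum T20 T21 D2).
  have nu2 := nrmsq (Tsum T10 T11 D1). have nv2 := nrmsq (Tsum T20 T21 D2).
  have E : forall u v, ip (u + v) (u + v) = ip u u + 2 * ip u v + ip v v.
    move=> u v; rewrite (bDl ilin) !(bDr isym ilin) (isym v u); lra.
  rewrite E.
  move: (l2norm ip (Tsum T10 T11 D1)) (l2norm ip (Tsum T20 T21 D2)) nu0 nv0 nu2 nv2 => nu nv nu0 nv0 nu2 nv2.
  set p := ip (Tsum T10 T11 D1) (Tsum T20 T21 D2).
  rewrite -nu2 -nv2 => hp.
  have hp' : - (gamma * nu * nv) <= p by move: hp; rewrite ler_norml => /andP[].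
  have Q : (1 - gamma ^+ 2) * nv ^+ 2 <= nu ^+ 2 + 2 * p + nv ^+ 2.
    have := sqr_ge0 (nu - gamma * nv). nra.
  have K0 : 0 <= bform a T21 T21 D2 D2 + bform a T20 T20 D2 D2 by apply: addr_ge0; apply: apos.
  have [Kz|Kn] := eqVneq (bform a T21 T21 D2 D2 + bform a T20 T20 D2 D2) 0.
    rewrite Kz mulr0; apply: mulr_ge0; first exact: ltW.
    have : 0 <= (1 - gamma ^+ 2) * nv ^+ 2.
      apply: mulr_ge0; last exact: sqr_ge0.
      case/andP: hg => g0 g1; rewrite subr_ge0 expr_le1 //; exact: ltW.
    lra.
  have D20 : D2 != 0.
    apply: contraNneq Kn => ->; by rewrite /bform !raddf0 (b0l alin) addr0.
  have := hcfl D2 D20 Kn.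
  have Kp : 0 < bform a T21 T21 D2 D2 + bform a T20 T20 D2 D2 by rewrite lt_def Kn K0.
  rewrite mulrA ler_pdivlMr // /bform -/(l2norm ip _) -nv2.
  rewrite -/(bform a T21 T21 D2 D2) -/(bform a T20 T20 D2 D2).
  move: (bform a T21 T21 D2 D2 + bform a T20 T20 D2 D2) Kp => K Kp hK.
  set t := 1 / tau ^+ 2.
  have : t * (tau ^+ 2 * K) <= t * (2 * (nu ^+ 2 + 2 * p + nv ^+ 2)).
    apply: ler_wpM2l; [exact: ltW | lra].
  rewrite mulrA tt mul1r; lra.
move=> n; rewrite /energy2; cbv beta zeta.
have SA := stiff_pos_id asym alin (raddfD T11) (raddfN T11) (raddfD T21) (raddfN T21)
     (U1 n) (U1 n.+1) (U2 n) (U2 n.+1).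
have SC := stiff_pos_id asym alin (raddfD T10) (raddfN T10) (raddfD T20) (raddfN T20)
     (U1 n) (U1 n.+1) (U2 n) (U2 n.+1).
have MQ := mass_sq isym ilin (Tsum T10 T11) (Tsum T20 T21) (U1 n) (U1 n.+1) (U2 n) (U2 n.+1).
have K := key (U1 n.+1 - U1 n) (U2 n.+1 - U2 n).
rewrite -MQ in K.
have p1 := apos (T11 (U1 n.+1 + U1 n) + T21 (U2 n.+1 + U2 n)).
have p2 := apos (T11 (U1 n.+1 - U1 n) - T21 (U2 n.+1 - U2 n)).
have p3 := apos (T10 (U1 n.+1 + U1 n) + T20 (U2 n.+1 + U2 n)).
have p4 := apos (T10 (U1 n.+1 - U1 n) - T20 (U2 n.+1 - U2 n)).
move: SA SC K p1 p2 p3 p4; set t := 1 / tau ^+ 2 => *.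
lra.
Qed.
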